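(* Let $n,r,k$ be positive integers with $n\ge 2r$. Then $\gamma_{\times k,t}(K(n,r))=k+r$ if and only if $n\ge r(k+r)$. Moreover, for every $n\ge r(k+r)$, every $k$-tuple total dominating set of $K(n,r)$ of cardinality $\gamma_{\times k,t}(K(n,r))$ is a clique (i.e., consists of pairwise disjoint $r$-sets).
   Context: For integers $n\ge 2r$, the Kneser graph $K(n,r)$ has as vertices the $r$-element subsets of $[n]=\{1,\dots,n\}$, two vertices being adjacent iff they are disjoint. For a graph $G$ and positive integer $k$, a set $D\subseteq V(G)$ is a $k$-tuple total dominating set if $|N_G(u)\cap D|\ge k$ for every $u\in V(G)$ ($N_G(u)$ the open neighborhood); $\gamma_{\times k,t}(G)$ is the minimum cardinality of such a set (defined when the minimum degree of $G$ is at least $k$). *)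

(* Defs.v *)
From mathcomp Require Import all_boot.
Set Implicit Arguments. Unset Strict Implicit. Unset Printing Implicit Defensive.

Definition open_nbhd (T : finType) (adj : rel T) (u : T) : {set T} :=
  [set v | adj u v].

Definition ktuple_tds (T : finType) (adj : rel T) (k : nat) (D : {set T}) : Prop :=
  forall u : T, k <= #|open_nbhd adj u :&: D|.

(* Convention: if no such set exists (the parameter is undefined), the value
   is 0; this never equals a positive number such as k + r. *)
Definition gamma_ktuple_total (T : finType) (adj : rel T) (k : nat) : nat :=
  if [pick D : {set T} | [forall u, k <= #|open_nbhd adj u :&: D|]] is Some D0
  then #|[arg min_(D < D0 | [forall u, k <= #|open_nbhd adj u :&: D|]) #|D|]|
  else 0.

Definition kneser_vertex (n r : nat) := {A : {set 'I_n} | #|A| == r}.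

Definition kneser_adj (n r : nat) : rel (kneser_vertex n r) :=
  fun A B => [disjoint val A & val B].

Definition is_clique (T : finType) (adj : rel T) (D : {set T}) : Prop :=
  forall u v, u \in D -> v \in D -> u != v -> adj u v.

(* Main.v *)
Require Import Defs.
From mathcomp Require Import all_boot zify.
Set Implicit Arguments. Unset Strict Implicit. Unset Printing Implicit Defensive.

Lemma subset_card_ex (T : finType) (A : {set T}) m :
  m <= #|A| -> exists2 S : {set T}, S \subset A & #|S| = m.
Proof.
move=> hm; exists [set x in take m (enum A)].
  by apply/subsetP => x; rewrite inE => /mem_take; rewrite mem_enum.
rewrite cardsE; move/card_uniqP: (take_uniq m (enum_uniq (mem A))) => ->.
by rewrite size_take -cardE; case: ltngtP hm => // ->.
Qed.

Lemma meet (T : finType) (A B : {set T}) x : x \in A -> x \in B -> ~~ [disjoint A & B].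
Proof. by move=> hA hB; apply/negP => d; have := disjointFr d hA; rewrite hB. Qed.

Lemma not_disj (T : finType) (A B : {set T}) :
  ~~ [disjoint A & B] -> exists2 x, x \in A & x \in B.
Proof.
move=> h; case: (set_0Vmem (A :&: B)) => [e | [x]].
  by rewrite -setI_eq0 e eqxx in h.
by rewrite inE => /andP[? ?]; exists x.
Qed.

Lemma extend_set n r (H : {set 'I_n}) :
  #|H| <= r -> r <= n -> exists2 u : {set 'I_n}, H \subset u & #|u| = r.
Proof.
move=> h1 h2.
have: r - #|H| <= #|~: H| by have := cardsC H; rewrite card_ord; lia.
case/subset_card_ex => S sS cS; exists (H :|: S); first exact: subsetUl.
rewrite cardsU cS.
have -> : H :&: S = set0.
  apply/setP => x; rewrite !inE; apply/negP => /andP[xH xS].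
  by have := subsetP sS x xS; rewrite inE xH.
rewrite cards0; lia.
Qed.

Definition pt n r (hn : 0 < n) (B : kneser_vertex n r) : 'I_n :=
  odflt (Ordinal hn) [pick x in val B].

Lemma pt_in n r (hn : 0 < n) (B : kneser_vertex n r) : 0 < r -> pt hn B \in val B.
Proof.
move=> hr; rewrite /pt; case: pickP => [x Hx | h] //=.
have : 0 < #|val B| by rewrite (eqP (valP B)).
by case/card_gt0P => x Hx; have := h x; rewrite /= Hx.
Qed.

Lemma core n r k (D S : {set kneser_vertex n r}) (H : {set 'I_n}) :
  r <= n -> ktuple_tds (@kneser_adj n r) k D -> S \subset D -> #|H| <= r ->
  (forall B, B \in S -> ~~ [disjoint val B & H]) -> k + #|S| <= #|D|.
Proof.
move=> rn tds sSD hH hit.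
have [u Hu cu] := extend_set hH rn.
have cu' : #|u| == r by rewrite cu.
pose v := (exist (fun A : {set 'I_n} => #|A| == r) u cu' : kneser_vertex n r).
have := tds v.
have sub : open_nbhd (@kneser_adj n r) v :&: D \subset D :\: S.
  apply/subsetP => B; rewrite !inE => /andP[adjB BD]; rewrite BD andbT.
  apply/negP => BS; have := hit B BS.
  rewrite /kneser_adj /= in adjB.
  by rewrite (disjointWr Hu) // disjoint_sym.
move/leq_trans => /(_ _ (subset_leq_card sub)).
rewrite cardsD (setIidPr sSD).
by rewrite addnC -leq_subRL // subset_leq_card.
Qed.

Lemma lower n r k (D : {set kneser_vertex n r}) :
  0 < n -> 0 < r -> 0 < k -> r <= n -> ktuple_tds (@kneser_adj n r) k D -> k + r <= #|D|.
Proof.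
move=> hn hr hk rn tds.
have hit (S : {set kneser_vertex n r}) : forall B, B \in S -> ~~ [disjoint val B & pt hn @: S].
  by move=> B BS; apply: (meet (x := pt hn B)); [exact: pt_in | apply: imset_f].
case: (leqP r #|D|) => h.
  have [S sS cS] := subset_card_ex h.
  have hH : #|pt hn @: S| <= r by apply: leq_trans (leq_imset_card _ _) _; rewrite cS.
  by have := core rn tds sS hH (hit S); rewrite cS.
have := core rn tds (subxx D) (leq_trans (leq_imset_card _ _) (ltnW h)) (hit D).
lia.
Qed.

Lemma minclique n r k (D : {set kneser_vertex n r}) :
  0 < n -> 0 < r -> 0 < k -> r <= n -> ktuple_tds (@kneser_adj n r) k D ->
  #|D| <= k + r -> is_clique (@kneser_adj n r) D.
Proof.
move=> hn hr hk rn tds hD B1 B2 h1 h2 ne.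
apply/negPn/negP => /not_disj [x x1 x2].
have lo := lower hn hr hk rn tds.
pose D' := D :\: [set B1; B2].
have cD' : #|D'| = #|D| - 2.
  rewrite cardsD (setIidPr _); last by apply/subsetP => B; rewrite !inE => /orP[]/eqP->.
  by rewrite cards2 ne.
have : r.-1 <= #|D'| by rewrite cD'; lia.
case/subset_card_ex => S' sS' cS'.
have nB1 : B1 \notin S' by apply/negP => /(subsetP sS'); rewrite !inE eqxx.
have nB2 : B2 \notin S' by apply/negP => /(subsetP sS'); rewrite !inE eqxx orbT.
pose S := B1 |: (B2 |: S').
have cS : #|S| = r.+1.
  rewrite /S cardsU1 cardsU1 nB2 !inE negb_or ne nB1 cS'; lia.
have sSD : S \subset D.
  apply/subsetP => B; rewrite !inE => /orP[/eqP->//|/orP[/eqP->//|]].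
  by move/(subsetP sS'); rewrite !inE => /andP[].
pose H := x |: (pt hn @: S').
have cH : #|H| <= r.
  rewrite cardsU1; have := leq_imset_card (pt hn) S'; rewrite cS'.
  move=> h; apply: leq_trans (leq_add (leq_b1 _) h) _; lia.
have := core rn tds sSD cH.
have hit : forall B, B \in S -> ~~ [disjoint val B & H].
  move=> B; rewrite !inE => /orP[/eqP->|/orP[/eqP->|BS]].
  - by apply: (meet x1); rewrite !inE eqxx.
  - by apply: (meet x2); rewrite !inE eqxx.
  - apply: (meet (x := pt hn B)); first exact: pt_in.
    by rewrite !inE imset_f // orbT.
move/(_ hit); rewrite cS; lia.
Qed.

Lemma clique_hit n r (D : {set kneser_vertex n r}) (u : {set 'I_n}) :
  0 < n -> is_clique (@kneser_adj n r) D ->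
  #|[set B in D | ~~ [disjoint val B & u]]| <= #|u|.
Proof.
move=> hn cl.
pose g (B : kneser_vertex n r) := odflt (Ordinal hn) [pick x in val B :&: u].
have gin (B : kneser_vertex n r) : ~~ [disjoint val B & u] -> g B \in val B :&: u.
  move=> /not_disj [x xB xu]; rewrite /g; case: pickP => [y Hy|h] //=.
  by have := h x; rewrite /= inE xB xu.
rewrite -(@card_in_imset _ _ g); last first.
  move=> B C; rewrite !inE => /andP[BD hB] /andP[CD hC] e.
  apply/eqP; apply/negPn/negP => ne.
  have := cl B C BD CD ne; rewrite /kneser_adj.
  have := gin B hB; have := gin C hC; rewrite -e !inE => /andP[gC _] /andP[gB _].
  by move=> d; have := meet gB gC; rewrite d.
apply: subset_leq_card; apply/subsetP => y /imsetP [B]; rewrite inE => /andP[_ hB] ->.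
by have := gin B hB; rewrite inE => /andP[].
Qed.

Lemma clique_tds n r k (D : {set kneser_vertex n r}) :
  0 < n -> is_clique (@kneser_adj n r) D -> #|D| = k + r -> ktuple_tds (@kneser_adj n r) k D.
Proof.
move=> hn cl cD u.
pose S := [set B in D | ~~ [disjoint val B & val u]].
have hS := clique_hit (val u) hn cl; rewrite (eqP (valP u)) in hS.
have sub : D :\: S \subset open_nbhd (@kneser_adj n r) u :&: D.
  apply/subsetP => B; rewrite !inE => /andP[]; rewrite negb_and negbK => /orP[]; last first.
    by rewrite /kneser_adj disjoint_sym => -> ->.
  by move=> /negPf ->.
apply: leq_trans (subset_leq_card sub).
rewrite cardsD (setIidPr _); last by apply/subsetP => B; rewrite inE => /andP[].
move: hS; rewrite cD => h; by rewrite -addnBA ?leq_addr.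
Qed.

Lemma clique_bound n r (D : {set kneser_vertex n r}) :
  is_clique (@kneser_adj n r) D -> #|D| * r <= n.
Proof.
move=> cl.
pose P := [set val B | B in D].
have tP : trivIset P.
  apply/trivIsetP => A C /imsetP[B hB ->] /imsetP[B' hB' ->] ne.
  by apply: cl => //; apply: contraNneq ne => ->.
move: tP; rewrite /trivIset => /eqP e.
have <- : #|P| = #|D| by apply: card_imset; exact: val_inj.
rewrite -sum_nat_const.
rewrite (eq_bigr (fun A : {set 'I_n} => #|A|)); last first.
  by move=> A /imsetP[B _ ->]; rewrite (eqP (valP B)).
by rewrite e; have := max_card (cover P); rewrite card_ord.
Qed.

Definition blk n r (i : nat) : {set 'I_n} := [set x : 'I_n | x %/ r == i].

Lemma card_blk n r i : 0 < r -> i.+1 * r <= n -> #|blk n r i| = r.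
Proof.
move=> hr hi.
have hn : 0 < n by apply: leq_trans hi; rewrite mulSn; lia.
pose h (j : 'I_r) : 'I_n := insubd (Ordinal hn) (i * r + j).
have hv (j : 'I_r) : val (h j) = i * r + j.
  rewrite val_insubd; case: ltnP => //; have := ltn_ord j; rewrite mulSn in hi; lia.
have -> : blk n r i = h @: 'I_r.
  apply/setP => x; rewrite inE; apply/eqP/imsetP.
  - move=> e; exists (Ordinal (ltn_pmod x hr)) => //; apply: val_inj.
    by rewrite hv /= -e -divn_eq.
  - by case=> j _ ->; rewrite hv divnMDl // divn_small // addn0.
rewrite card_imset ?card_ord // => j1 j2 /(congr1 val); rewrite !hv => e.
by apply: val_inj => /=; lia.
Qed.

Lemma exists_clique n r k : 0 < r -> r * (k + r) <= n ->
  exists D : {set kneser_vertex n r}, is_clique (@kneser_adj n r) D /\ #|D| = k + r.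
Proof.
move=> hr hn.
have cb (i : 'I_(k + r)) : #|blk n r i| == r.
  by apply/eqP/card_blk => //; apply: leq_trans hn; rewrite mulnC leq_mul2l ltn_ord orbT.
pose f (i : 'I_(k + r)) := (exist (fun A : {set 'I_n} => #|A| == r) (blk n r i) (cb i) : kneser_vertex n r).
have finj : injective f.
  move=> i j /(congr1 val) /= e.
  have : 0 < #|blk n r i| by rewrite (eqP (cb i)).
  case/card_gt0P => x xi; have xj := xi; rewrite e in xj; rewrite !inE in xi xj.
  by apply: ord_inj; rewrite -(eqP xi) -(eqP xj).
exists (f @: setT); split; last by rewrite card_imset // cardsT card_ord.
move=> B C /imsetP[i _ ->] /imsetP[j _ ->] ne.
have nij : i != j by apply: contraNneq ne => ->.
rewrite /kneser_adj /=; apply/negPn/negP => /not_disj [x].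
rewrite !inE => /eqP e1 /eqP e2; have eij : i = j by apply: ord_inj; rewrite -e1 -e2.
by rewrite eij eqxx in nij.
Qed.

Lemma gamma_spec (T : finType) (adj : rel T) k :
  ((forall D, ~ ktuple_tds adj k D) /\ gamma_ktuple_total adj k = 0) \/
  exists D, [/\ ktuple_tds adj k D, #|D| = gamma_ktuple_total adj k &
     forall D', ktuple_tds adj k D' -> gamma_ktuple_total adj k <= #|D'|].
Proof.
rewrite /gamma_ktuple_total; case: pickP => [D0 HD0 | none].
  right; case: arg_minnP => // D HD min; exists D; split => //.
    by move/forallP: HD.
  by move=> D' HD'; apply: min; apply/forallP.
left; split => // D HD; have := none D.
by have -> : [forall u, k <= #|open_nbhd adj u :&: D|] by apply/forallP.
Qed.

Theorem theorem3p2 (n r k : nat) :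
  0 < n -> 0 < r -> 0 < k -> 2 * r <= n ->
  (gamma_ktuple_total (@kneser_adj n r) k = k + r <-> r * (k + r) <= n) /\
  (r * (k + r) <= n ->
     forall D : {set kneser_vertex n r},
       ktuple_tds (@kneser_adj n r) k D ->
       #|D| = gamma_ktuple_total (@kneser_adj n r) k ->
       is_clique (@kneser_adj n r) D).
Proof.
move=> hn hr hk h2r.
have rn : r <= n by lia.
have part1 : gamma_ktuple_total (@kneser_adj n r) k = k + r <-> r * (k + r) <= n.
  split.
    case: (gamma_spec (@kneser_adj n r) k) => [[_ ->] | [D [tD cD _]]]; first lia.
    move=> g; rewrite g in cD.
    have cl := minclique hn hr hk rn tD (eq_leq cD).
    by have := clique_bound cl; rewrite cD mulnC.
  move=> hb; have [D0 [cl0 c0]] := exists_clique hr hb.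
  have t0 := clique_tds hn cl0 c0.
  case: (gamma_spec (@kneser_adj n r) k) => [[nt _] | [D [tD cD mD]]].
    by case: (nt D0).
  have := mD D0 t0; have := lower hn hr hk rn tD; rewrite c0 cD; lia.
split => // hb D tD cD.
by apply: (minclique hn hr hk rn tD); rewrite cD (proj2 part1 hb).
Qed.
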